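(* Let $T$ be a rank-one transformation given by a cutting and stacking construction and let $I$ be the level of $C_0$. Then for all sets $A,B\subseteq I$ which are finite unions of levels (of columns $C_j$), $$\frac{1}{a_n(I)}\sum_{k=0}^{n-1}\mu(A\cap T^kB)\longrightarrow \mu(A)\mu(B)\quad (n\to\infty).$$
   Context: $(X,\mathcal B,\mu)$ is a standard Borel space with a nonatomic $\sigma$-finite measure. A rank-one transformation given by cutting and stacking: $C_0$ consists of a single level $I$ of positive finite measure; column $C_n$ has height $h_n$, levels of measure $w_n$; it is cut into $r_n\ge 2$ subcolumns of equal width, $s_{n,k}\ge 0$ spacers are placed above the $k$-th subcolumn, and the subcolumns are stacked left to right to form $C_{n+1}$; $T$ maps each level to the one directly above it. For a set $F$ of positive finite measure, $u_k(F)=\mu(F\cap T^kF)/\mu(F)^2$ and $a_n(F)=\sum_{k=0}^{n-1}u_k(F)$. *)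

(* Defs.v *)
From Stdlib Require Import Reals List.
Open Scope R_scope.
Set Implicit Arguments.

(* Extended nonnegative values: [Some r] is finite, [None] is +infinity. *)
Definition esum_is (f : nat -> option R) (s : option R) : Prop :=
  match s with
  | Some l => exists g : nat -> R, (forall n, f n = Some (g n)) /\ infinite_sum g l
  | None => ~ (exists (g : nat -> R) (l : R),
                 (forall n, f n = Some (g n)) /\ infinite_sum g l)
  end.

Record MeasureSpace (X : Type) := {
  measurable : (X -> Prop) -> Prop;
  mu : (X -> Prop) -> option R;
  meas_empty : measurable (fun _ => False);
  meas_compl : forall E, measurable E -> measurable (fun x => ~ E x);
  meas_union : forall F : nat -> X -> Prop,
      (forall n, measurable (F n)) -> measurable (fun x => exists n, F n x);
  mu_empty : mu (fun _ => False) = Some 0;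
  mu_nonneg : forall E r, mu E = Some r -> 0 <= r;
  mu_sigma : forall F : nat -> X -> Prop,
      (forall n, measurable (F n)) ->
      (forall m n, m <> n -> forall x, F m x -> F n x -> False) ->
      esum_is (fun n => mu (F n)) (mu (fun x => exists n, F n x))
}.

(* real value of the measure (used only on sets of finite measure) *)
Definition muR (X : Type) (M : MeasureSpace X) (E : X -> Prop) : R :=
  match mu M E with Some r => r | None => 0 end.

Fixpoint sumR (f : nat -> R) (n : nat) : R :=
  match n with O => 0 | S m => sumR f m + f m end.

Fixpoint sumN (f : nat -> nat) (n : nat) : nat :=
  match n with O => O | S m => (sumN f m + f m)%nat end.

(* Cutting and stacking combinatorics: r n = number of cuts of C_n,
   s n k = number of spacers above the k-th subcolumn (k < r n). *)
Fixpoint height (r : nat -> nat) (s : nat -> nat -> nat) (n : nat) : nat :=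
  match n with
  | O => 1%nat
  | S m => (r m * height r s m + sumN (s m) (r m))%nat
  end.

(* position in C_{n+1} of the bottom of the k-th subcolumn of C_n *)
Definition offset (r : nat -> nat) (s : nat -> nat -> nat) (n k : nat) : nat :=
  (k * height r s n + sumN (s n) k)%nat.

(* width of the levels of C_n, w_0 = mu(I) *)
Fixpoint width (w0 : R) (r : nat -> nat) (n : nat) : R :=
  match n with O => w0 | S m => width w0 r m / INR (r m) end.

Definition iter_image (X : Type) (T : X -> X) (k : nat) (F : X -> Prop) : X -> Prop :=
  fun x => exists y, F y /\ Nat.iter k T y = x.

(* T is a rank-one transformation on (X, M) obtained by cutting and stacking
   with parameters r, s; L n i (i < height n) is the i-th level (from the
   bottom) of column C_n; C_0 has the single level L 0%nat 0%nat = I. *)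
Record RankOne (X : Type) (M : MeasureSpace X) (T : X -> X)
       (r : nat -> nat) (s : nat -> nat -> nat) (L : nat -> nat -> X -> Prop) : Prop := {
  ro_inv : exists Tinv : X -> X, (forall x, Tinv (T x) = x) /\ (forall x, T (Tinv x) = x)
           /\ (forall E, measurable M E -> measurable M (fun x => E (Tinv x)));
  ro_meas : forall E, measurable M E -> measurable M (fun x => E (T x));
  ro_pres : forall E, measurable M E -> mu M (fun x => E (T x)) = mu M E;
  ro_r : forall n, (2 <= r n)%nat;
  ro_Lmeas : forall n i, (i < height r s n)%nat -> measurable M (L n i);
  ro_I : 0 < muR M (L 0%nat 0%nat);
  ro_width : forall n i, (i < height r s n)%nat ->
      mu M (L n i) = Some (width (muR M (L 0%nat 0%nat)) r n);
  ro_disj : forall n i j, (i < height r s n)%nat -> (j < height r s n)%nat -> i <> j ->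
      forall x, L n i x -> L n j x -> False;
  ro_up : forall n i, (S i < height r s n)%nat ->
      forall x, L n i x <-> L n (S i) (T x);
  (* cutting: level i of C_n is the union of its r n pieces, the k-th piece
     being level (offset n k + i) of C_{n+1}; the remaining levels of C_{n+1}
     are the spacers *)
  ro_cut : forall n i, (i < height r s n)%nat ->
      forall x, L n i x <-> exists k, (k < r n)%nat /\ L (S n) (offset r s n k + i)%nat x;
  ro_cover : mu M (fun x => ~ exists n i, (i < height r s n)%nat /\ L n i x) = Some 0
}.

Definition level_union (X : Type) (r : nat -> nat) (s : nat -> nat -> nat)
  (L : nat -> nat -> X -> Prop) (A : X -> Prop) : Prop :=
  exists l : list (nat * nat),
    (forall p, In p l -> (snd p < height r s (fst p))%nat) /\
    (forall x, A x <-> exists p, In p l /\ L (fst p) (snd p) x).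

Definition inter (X : Type) (A B : X -> Prop) : X -> Prop := fun x => A x /\ B x.

Definition u_coef (X : Type) (M : MeasureSpace X) (T : X -> X) (F : X -> Prop) (k : nat) : R :=
  muR M (inter F (iter_image T k F)) / (muR M F) ^ 2.

Definition a_coef (X : Type) (M : MeasureSpace X) (T : X -> X) (F : X -> Prop) (n : nat) : R :=
  sumR (u_coef M T F) n.

(* Main.v *)
Require Import Defs.
From Stdlib Require Import Arith Reals Lia Lra List Classical ClassicalEpsilon FunctionalExtensionality PropExtensionality.


Open Scope R_scope.

Lemma pext (X : Type) (E F : X -> Prop) : (forall x, E x <-> F x) -> E = F.
Proof. intro H; apply functional_extensionality; intro x; apply propositional_extensionality; auto. Qed.

Definition indic (P : Prop) : R := if excluded_middle_informative P then 1 else 0.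

Lemma indic_bounds P : 0 <= indic P <= 1.
Proof. unfold indic; destruct excluded_middle_informative; lra. Qed.

Lemma indic_sq P : indic P * indic P = indic P.
Proof. unfold indic; destruct excluded_middle_informative; lra. Qed.

Lemma sumR_plus f g n : sumR (fun i => f i + g i) n = sumR f n + sumR g n.
Proof. induction n; simpl; lra. Qed.

Lemma sumR_scal c f n : c * sumR f n = sumR (fun i => c * f i) n.
Proof. induction n; simpl; lra. Qed.

Lemma sumR_ext f g n : (forall i, (i < n)%nat -> f i = g i) -> sumR f n = sumR g n.
Proof. induction n; simpl; intros; auto. rewrite IHn by (intros; apply H; lia). rewrite H by lia. auto. Qed.

Lemma sumR_le f g n : (forall i, (i < n)%nat -> f i <= g i) -> sumR f n <= sumR g n.
Proof. induction n; simpl; intros; [lra|]. assert (f n <= g n) by (apply H; lia).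
 assert (sumR f n <= sumR g n) by (apply IHn; intros; apply H; lia). lra. Qed.

Lemma sumR_nonneg f n : (forall i, (i < n)%nat -> 0 <= f i) -> 0 <= sumR f n.
Proof. intro H. replace 0 with (sumR (fun _ => 0) n). apply sumR_le; auto.
 induction n; simpl; auto. rewrite IHn; [lra|intros; apply H; lia]. Qed.

Lemma sumR_abs f n K : (forall i, (i < n)%nat -> Rabs (f i) <= K) -> Rabs (sumR f n) <= INR n * K.
Proof. induction n; intros H; simpl sumR. rewrite Rabs_R0; simpl; lra.
 rewrite S_INR. assert (Rabs (f n) <= K) by (apply H; lia).
 assert (Rabs (sumR f n) <= INR n * K) by (apply IHn; intros; apply H; lia).
 pose proof (Rabs_triang (sumR f n) (f n)). lra. Qed.

Lemma sumR_term f n k : (forall i, (i < n)%nat -> 0 <= f i) -> (k < n)%nat -> f k <= sumR f n.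
Proof. induction n; intros H Hk; [lia|]. simpl.
 assert (0 <= sumR f n) by (apply sumR_nonneg; intros; apply H; lia).
 destruct (Nat.eq_dec k n). subst; lra.
 assert (f k <= sumR f n) by (apply IHn; [intros; apply H; lia|lia]).
 assert (0 <= f n) by (apply H; lia). lra. Qed.

Lemma sumR_exch (f : nat -> nat -> R) m n :
  sumR (fun k => sumR (fun i => f k i) n) m = sumR (fun i => sumR (fun k => f k i) m) n.
Proof. induction m; simpl.
 - induction n; simpl; lra.
 - rewrite IHm. rewrite <- sumR_plus. auto. Qed.

Lemma sumR_mono f n m : (forall i, 0 <= f i) -> (n <= m)%nat -> sumR f n <= sumR f m.
Proof. intros H Hnm; induction Hnm as [|m' Hm IH]; simpl; [lra|]. specialize (H m'). lra. Qed.

Lemma sumR_shift f n d : sumR (fun k => f (k + d)%nat) n + sumR f d = sumR f (n + d).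
Proof. induction n; simpl; [lra|]. lra. Qed.

Lemma sumR_const c n : sumR (fun _ => c) n = INR n * c.
Proof. induction n; simpl sumR; [simpl; lra|]. rewrite S_INR; lra. Qed.

Lemma sumR_div f c n : sumR (fun k => f k / c) n = sumR f n / c.
Proof. induction n; simpl; [unfold Rdiv; lra|]. rewrite IHn. unfold Rdiv; lra. Qed.

Lemma sum_f_sumR g n : sum_f_R0 g n = sumR g (S n).
Proof. induction n; simpl; [lra|]. simpl in IHn. rewrite IHn. auto. Qed.

Lemma inf_sum_fin g n : (forall i, (n <= i)%nat -> g i = 0) -> infinite_sum g (sumR g n).
Proof. intros H eps He. exists n. intros m Hm. rewrite sum_f_sumR.
 replace (sumR g (S m)) with (sumR g n). unfold R_dist. rewrite Rminus_diag, Rabs_R0; lra.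
 assert (Hm' : (n <= S m)%nat) by lia. induction Hm'; auto. simpl. rewrite H by lia. lra. Qed.

Lemma sumR_scal_r f n c : sumR f n * c = sumR (fun i => f i * c) n.
Proof. induction n; simpl; lra. Qed.

Lemma sumR_minus f g n : sumR (fun i => f i - g i) n = sumR f n - sumR g n.
Proof. induction n; simpl; lra. Qed.

Lemma prefix_sum f i n : (i < n)%nat ->
  sumR (fun j => if Nat.leb j i then f j else 0) n = sumR f (S i).
Proof. induction n; intro H; [lia|]. destruct (Nat.eq_dec i n).
 - subst. simpl sumR at 1. rewrite Nat.leb_refl. simpl sumR. f_equal.
   apply sumR_ext; intros j Hj. replace (Nat.leb j n) with true; auto. symmetry; apply Nat.leb_le; lia.
 - simpl sumR at 1. rewrite IHn by lia. replace (Nat.leb n i) with false. lra.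
   symmetry; apply Nat.leb_gt; lia. Qed.

Lemma tri_sum a n : (forall i, a i * a i = a i) ->
  sumR (fun i => a i * sumR a (S i)) n = sumR a n * (sumR a n + 1) / 2.
Proof. intro H; induction n; simpl; [lra|]. simpl in IHn. rewrite IHn.
 specialize (H n). set (c := sumR a n) in *. nra. Qed.

Section Meas.
Variables (X : Type) (M : MeasureSpace X).

Lemma meas_or E F : measurable M E -> measurable M F -> measurable M (fun x => E x \/ F x).
Proof. intros HE HF.
 pose (G := fun n : nat => match n with O => E | _ => F end).
 assert (H := meas_union M G (fun n => match n with O => HE | _ => HF end)).
 replace (fun x => E x \/ F x) with (fun x => exists n, G n x); auto.
 apply pext; intro x; split. intros [[|n] Hn]; simpl in Hn; auto.
 intros [Hx|Hx]; [exists O|exists 1%nat]; auto. Qed.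

Lemma meas_and E F : measurable M E -> measurable M F -> measurable M (fun x => E x /\ F x).
Proof. intros HE HF.
 replace (fun x => E x /\ F x) with (fun x => ~ ((fun y => ~ E y \/ ~ F y) x)).
 apply meas_compl, meas_or; apply meas_compl; auto.
 apply pext; intro x; simpl; tauto. Qed.

Lemma meas_pand (P : Prop) E : (P -> measurable M E) -> measurable M (fun x => P /\ E x).
Proof. intro H. destruct (classic P) as [HP|HP].
 replace (fun x => P /\ E x) with E; auto. apply pext; tauto.
 replace (fun x => P /\ E x) with (fun _ : X => False). apply meas_empty. apply pext; tauto. Qed.

Lemma meas_exlt (F : nat -> X -> Prop) n : (forall i, (i < n)%nat -> measurable M (F i)) ->
  measurable M (fun x => exists i, (i < n)%nat /\ F i x).
Proof. intro H. apply (meas_union M (fun i x => (i < n)%nat /\ F i x)).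
 intro i; apply meas_pand; auto. Qed.

Lemma add2 E F a b : measurable M E -> measurable M F -> (forall x, E x -> F x -> False) ->
  mu M E = Some a -> mu M F = Some b -> mu M (fun x => E x \/ F x) = Some (a + b).
Proof. intros HE HF Hd Ha Hb.
 pose (G := fun n : nat => match n with O => E | 1%nat => F | _ => fun _ : X => False end).
 assert (Hm : forall n, measurable M (G n)).
 { intros [|[|n]]; simpl; auto. apply meas_empty. }
 assert (Hdis : forall m n, m <> n -> forall x, G m x -> G n x -> False).
 { intros [|[|m]] [|[|n]] Hmn x; simpl; try tauto; eauto. }
 pose proof (mu_sigma M G Hm Hdis) as H.
 replace (fun x => exists n, G n x) with (fun x => E x \/ F x) in H.
 2:{ apply pext; intro x; split. intros [Hx|Hx]; [exists O|exists 1%nat]; auto.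
     intros [[|[|n]] Hn]; simpl in Hn; tauto. }
 pose (g := fun n : nat => match n with O => a | 1%nat => b | _ => 0 end).
 assert (Hg : forall n, mu M (G n) = Some (g n)).
 { intros [|[|n]]; simpl; auto. apply mu_empty. }
 assert (Hs : infinite_sum g (sumR g 2)).
 { apply inf_sum_fin. intros [|[|i]] Hi; try lia; reflexivity. }
 simpl in Hs. replace (0 + a + b) with (a + b) in Hs by lra.
 destruct (mu M (fun x => E x \/ F x)) as [l|] eqn:El; simpl in H.
 - destruct H as [g' [Hg' Hs']]. f_equal.
   assert (forall n, g' n = g n). { intro n. specialize (Hg' n). rewrite Hg in Hg'. congruence. }
   apply (uniqueness_sum g' l (a+b)); auto.
   intros eps He. destruct (Hs eps He) as [N HN]. exists N. intros n Hn.
   replace (sum_f_R0 g' n) with (sum_f_R0 g n). auto. apply sum_eq; intros; auto.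
 - exfalso; apply H. exists g, (a+b). auto.
Qed.

Lemma add2_inv E F t : measurable M E -> measurable M F -> (forall x, E x -> F x -> False) ->
  mu M (fun x => E x \/ F x) = Some t -> exists a b, mu M E = Some a /\ mu M F = Some b.
Proof. intros HE HF Hd Ht.
 pose (G := fun n : nat => match n with O => E | 1%nat => F | _ => fun _ : X => False end).
 assert (Hm : forall n, measurable M (G n)).
 { intros [|[|n]]; simpl; auto. apply meas_empty. }
 assert (Hdis : forall m n, m <> n -> forall x, G m x -> G n x -> False).
 { intros [|[|m]] [|[|n]] Hmn x; simpl; try tauto; eauto. }
 pose proof (mu_sigma M G Hm Hdis) as H.
 replace (fun x => exists n, G n x) with (fun x => E x \/ F x) in H.
 2:{ apply pext; intro x; split. intros [Hx|Hx]; [exists O|exists 1%nat]; auto.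
     intros [[|[|n]] Hn]; simpl in Hn; tauto. }
 rewrite Ht in H. destruct H as [g [Hg _]]. exists (g O), (g 1%nat). split; [apply (Hg O)|apply (Hg 1%nat)].
Qed.

Lemma mono E F t : measurable M E -> measurable M F -> (forall x, E x -> F x) ->
  mu M F = Some t -> exists a, mu M E = Some a /\ 0 <= a <= t.
Proof. intros HE HF Hs Ht.
 replace F with (fun x => E x \/ (F x /\ ~ E x)) in Ht.
 2:{ apply pext; intro x. split. intros [?|[? ?]]; auto. intro; destruct (classic (E x)); auto. }
 assert (HF' : measurable M (fun x => F x /\ ~ E x)) by (apply meas_and; auto; apply meas_compl; auto).
 assert (Hd : forall x, E x -> F x /\ ~ E x -> False) by tauto.
 destruct (add2_inv _ _ _ HE HF' Hd Ht) as [a [b [Ha Hb]]].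
 rewrite (add2 _ _ _ _ HE HF' Hd Ha Hb) in Ht. injection Ht; intro; subst.
 exists a; split; auto. pose proof (mu_nonneg M _ Ha). pose proof (mu_nonneg M _ Hb). lra. Qed.

Lemma fin_add (F : nat -> X -> Prop) n :
  (forall i, (i < n)%nat -> measurable M (F i)) ->
  (forall i j, (i < n)%nat -> (j < n)%nat -> i <> j -> forall x, F i x -> F j x -> False) ->
  (forall i, (i < n)%nat -> mu M (F i) = Some (muR M (F i))) ->
  mu M (fun x => exists i, (i < n)%nat /\ F i x) = Some (sumR (fun i => muR M (F i)) n).
Proof. induction n; intros Hm Hd Hf.
 - simpl. replace (fun x => exists i, (i < 0)%nat /\ F i x) with (fun _ : X => False). apply mu_empty.
   apply pext; intro x; split; [tauto|]. intros [i [Hi _]]; lia.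
 - replace (fun x => exists i, (i < S n)%nat /\ F i x) with
     (fun x => (fun y => exists i, (i < n)%nat /\ F i y) x \/ F n x).
   2:{ apply pext; intro x; split. intros [[i [Hi Hx]]|Hx]; [exists i|exists n]; split; auto; lia.
       intros [i [Hi Hx]]. destruct (Nat.eq_dec i n); [subst; auto|left; exists i; split; auto; lia]. }
   simpl. apply add2.
   + apply meas_exlt; intros; apply Hm; lia.
   + apply Hm; lia.
   + intros x [i [Hi Hx]] Hx'. apply (Hd i n ltac:(lia) ltac:(lia) ltac:(lia) x Hx Hx').
   + apply IHn; intros. apply Hm; lia. apply (Hd i j ltac:(lia) ltac:(lia) H1 x H2 H3). apply Hf; lia.
   + apply Hf; lia.
Qed.

Lemma mu_pand (P : Prop) E a : (P -> mu M E = Some a) -> mu M (fun x => P /\ E x) = Some (indic P * a).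
Proof. intro H. unfold indic; destruct excluded_middle_informative as [HP|HP].
 replace (fun x => P /\ E x) with E. rewrite H; auto; f_equal; lra. apply pext; tauto.
 replace (fun x => P /\ E x) with (fun _ : X => False). rewrite mu_empty; f_equal; lra. apply pext; tauto. Qed.

Lemma muR_some E a : mu M E = Some a -> muR M E = a.
Proof. unfold muR; intro H; rewrite H; auto. Qed.

End Meas.

Lemma sum_bound01 f n w : (forall k, 0 <= f k <= w) -> 0 <= sumR f n <= INR n * w.
Proof. intro H. split. apply sumR_nonneg; intros; apply H.
 rewrite <- sumR_const. apply sumR_le; intros; apply H. Qed.

Lemma shift_cmp (f1 f2 : nat -> R) w d n : (forall k, 0 <= f1 k <= w) -> (forall k, 0 <= f2 k <= w) ->
  (forall k, f1 (k + d)%nat = f2 k) -> Rabs (sumR f1 n - sumR f2 n) <= INR d * w.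
Proof. intros H1 H2 H12.
 assert (0 <= w) by (destruct (H1 O); lra).
 destruct (le_lt_dec d n) as [Hdn|Hdn].
 - replace n with ((n - d) + d)%nat by lia.
   rewrite <- (sumR_shift f1). rewrite (sumR_ext (fun k => f1 (k + d)%nat) f2) by auto.
   rewrite Nat.add_comm. rewrite <- (sumR_shift f2 d (n - d)).
   pose proof (sum_bound01 f1 d w H1). pose proof (sum_bound01 (fun k => f2 (k + (n - d))%nat) d w ltac:(intro; apply H2)).
   apply Rabs_le. lra.
 - pose proof (sum_bound01 f1 n w H1). pose proof (sum_bound01 f2 n w H2).
   assert (INR n <= INR d) by (apply le_INR; lia).
   assert (INR n * w <= INR d * w) by (apply Rmult_le_compat_r; auto).
   apply Rabs_le. lra.
Qed.

Lemma lim_ratio (N D S : nat -> R) (a b c K1 K2 : R) : 0 < b -> 0 < c ->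
  (forall n, Rabs (N n - a * S n) <= K1) -> (forall n, Rabs (D n - b * S n) <= K2) ->
  (forall K, exists N0, forall n, (N0 <= n)%nat -> D n >= K) ->
  Un_cv (fun n => / (D n / c) * N n) (c * a / b).
Proof. intros Hb Hc H1 H2 Hdiv eps He.
 set (C0 := b * K1 + Rabs a * K2).
 destruct (Hdiv (c * C0 / (b * eps) + 1)) as [N0 HN0].
 exists N0. intros n Hn. specialize (HN0 n Hn). unfold R_dist.
 assert (HK1 : 0 <= K1) by (specialize (H1 O); pose proof (Rabs_pos (N 0%nat - a * S 0%nat)); lra).
 assert (HK2 : 0 <= K2) by (specialize (H2 O); pose proof (Rabs_pos (D 0%nat - b * S 0%nat)); lra).
 assert (HC0 : 0 <= C0) by (unfold C0; pose proof (Rabs_pos a); nra).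
 assert (Hq : 0 <= c * C0 / (b * eps)).
 { unfold Rdiv. apply Rmult_le_pos; [nra|]. left; apply Rinv_0_lt_compat; nra. }
 assert (HD : 0 < D n) by lra.
 replace (/ (D n / c) * N n - c * a / b) with (c * (b * (N n - a * S n) - a * (D n - b * S n)) / (b * D n))
   by (field; lra).
 assert (Hnum : Rabs (b * (N n - a * S n) - a * (D n - b * S n)) <= C0).
 { unfold C0. unfold Rminus at 1. eapply Rle_trans. apply Rabs_triang.
   rewrite Rabs_Ropp, !Rabs_mult, (Rabs_right b) by lra.
   specialize (H1 n); specialize (H2 n). pose proof (Rabs_pos a).
   apply Rplus_le_compat; apply Rmult_le_compat_l; lra. }
 set (Z := b * (N n - a * S n) - a * (D n - b * S n)) in *.
 unfold Rdiv. rewrite Rabs_mult, Rabs_mult, Rabs_inv, (Rabs_right c), (Rabs_right (b * D n)) by nra.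
 apply (Rmult_lt_reg_r (b * D n)). nra.
 rewrite Rmult_assoc, Rinv_l by nra. rewrite Rmult_1_r.
 assert (Eq : b * eps * (c * C0 / (b * eps)) = c * C0) by (field; lra).
 assert (b * eps * D n >= b * eps * (c * C0 / (b * eps) + 1)) by (apply Rmult_ge_compat_l; nra).
 pose proof (Rabs_pos Z). nra.
Qed.

Section Rank.
Variables (X : Type) (M : MeasureSpace X) (T Tinv : X -> X)
  (r : nat -> nat) (s : nat -> nat -> nat) (L : nat -> nat -> X -> Prop).
Hypothesis HT : RankOne M T r s L.
Hypothesis HTi1 : forall x, Tinv (T x) = x.
Hypothesis HTi2 : forall x, T (Tinv x) = x.
Hypothesis HTim : forall E, measurable M E -> measurable M (fun x => E (Tinv x)).

Notation h := (height r s).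
Notation w := (fun n => width (muR M (L 0%nat 0%nat)) r n).

Lemma iter_inv1 k y : Nat.iter k Tinv (Nat.iter k T y) = y.
Proof. revert y; induction k; intro y; auto. rewrite Nat.iter_succ_r. simpl. rewrite HTi1. auto. Qed.
Lemma iter_inv2 k y : Nat.iter k T (Nat.iter k Tinv y) = y.
Proof. revert y; induction k; intro y; auto. rewrite Nat.iter_succ_r. simpl. rewrite HTi2. auto. Qed.

Lemma img_iff k F x : iter_image T k F x <-> F (Nat.iter k Tinv x).
Proof. unfold iter_image; split. intros [y [Hy <-]]. rewrite iter_inv1; auto.
 intro H. exists (Nat.iter k Tinv x). split; auto. apply iter_inv2. Qed.

Lemma img_eq k F : iter_image T k F = fun x => F (Nat.iter k Tinv x).
Proof. apply pext; apply img_iff. Qed.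

Lemma meas_iter k : forall F, measurable M F -> measurable M (fun x => F (Nat.iter k Tinv x)).
Proof. induction k; intros F HF; simpl; auto. apply (IHk (fun z => F (Tinv z))). apply HTim; auto. Qed.

Lemma meas_img k F : measurable M F -> measurable M (iter_image T k F).
Proof. intro; rewrite img_eq; apply meas_iter; auto. Qed.

Lemma pres_inv E : measurable M E -> mu M (fun x => E (Tinv x)) = mu M E.
Proof. intro HE. rewrite <- (ro_pres HT (fun x => E (Tinv x))) by (apply HTim; auto).
 f_equal. apply pext; intro x; rewrite HTi1; tauto. Qed.

Lemma level_up n i y : (S i < h n)%nat -> (L n (S i) y <-> L n i (Tinv y)).
Proof. intro Hi. rewrite (ro_up HT n Hi (Tinv y)). rewrite HTi2. tauto. Qed.

Definition g p i j k := muR M (inter (L p i) (iter_image T k (L p j))).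

Lemma g_meas p i j k : (i < h p)%nat -> (j < h p)%nat -> measurable M (inter (L p i) (iter_image T k (L p j))).
Proof. intros; apply meas_and; [apply (ro_Lmeas HT); auto| apply meas_img; apply (ro_Lmeas HT); auto]. Qed.

Lemma g_fin p i j k : (i < h p)%nat -> (j < h p)%nat ->
  mu M (inter (L p i) (iter_image T k (L p j))) = Some (g p i j k) /\ 0 <= g p i j k <= w p.
Proof. intros Hi Hj.
 destruct (mono X M (inter (L p i) (iter_image T k (L p j))) (L p i) (w p)) as [a [Ha Hb]].
 apply g_meas; auto. apply (ro_Lmeas HT); auto. intros x [? ?]; auto. apply (ro_width HT); auto.
 unfold g. rewrite (muR_some X M _ _ Ha). auto. Qed.

Lemma iter_comm k x : Nat.iter k Tinv (Tinv x) = Tinv (Nat.iter k Tinv x).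
Proof. rewrite <- Nat.iter_succ_r. reflexivity. Qed.

Lemma g_shift p i j k : (S i < h p)%nat -> (S j < h p)%nat -> g p (S i) (S j) k = g p i j k.
Proof. intros Hi Hj. unfold g.
 replace (inter (L p (S i)) (iter_image T k (L p (S j)))) with
   (fun x => (inter (L p i) (iter_image T k (L p j))) (Tinv x)).
 unfold muR; rewrite pres_inv; auto. apply g_meas; lia.
 apply pext; intro x. unfold inter. rewrite !img_iff. rewrite (level_up p i x Hi), (level_up p j _ Hj).
 rewrite iter_comm. tauto. Qed.

Lemma g_k p i j k : (S j < h p)%nat -> g p i (S j) k = g p i j (S k).
Proof. intros Hj. unfold g. f_equal. apply pext; intro x. unfold inter. rewrite !img_iff.
 rewrite (level_up p j _ Hj). simpl. tauto. Qed.

Lemma g_diag p i : (i < h p)%nat -> g p i i 0 = w p.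
Proof. intro Hi. unfold g. replace (inter (L p i) (iter_image T 0 (L p i))) with (L p i).
 apply muR_some. apply (ro_width HT); auto. apply pext; intro x; unfold inter; rewrite img_iff; simpl; tauto. Qed.

Lemma g_diag2 p i d : forall j, (j + d < h p)%nat -> g p i j d = g p i (j + d) 0.
Proof. induction d; intros j Hj. rewrite Nat.add_0_r; auto.
 rewrite <- g_k by lia. rewrite IHd by lia. f_equal; lia. Qed.


Definition EP p (P : nat -> Prop) : X -> Prop := fun x => exists i, (i < h p)%nat /\ P i /\ L p i x.

Lemma EP_meas p P : measurable M (EP p P).
Proof. apply (meas_exlt X M (fun i x => P i /\ L p i x)). intros; apply meas_pand; intros; apply (ro_Lmeas HT); auto. Qed.

Lemma mu_EP p P : mu M (EP p P) = Some (sumR (fun i => indic (P i) * w p) (h p)).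
Proof.
 assert (H := fin_add X M (fun i x => P i /\ L p i x) (h p)).
 cbv beta in H. unfold EP. rewrite H.
 - f_equal. apply sumR_ext; intros i Hi. apply muR_some. apply mu_pand. intros; apply (ro_width HT); auto.
 - intros; apply meas_pand; intros; apply (ro_Lmeas HT); auto.
 - intros i j Hi Hj Hij x [_ H1] [_ H2]. apply (ro_disj HT p Hi Hj Hij x H1 H2).
 - intros i Hi. rewrite (muR_some X M _ (indic (P i) * w p)); apply mu_pand; intros; apply (ro_width HT); auto.
Qed.

Lemma mu_inner p Q i k : (i < h p)%nat ->
  mu M (fun x => exists j, (j < h p)%nat /\ (Q j /\ inter (L p i) (iter_image T k (L p j)) x))
  = Some (sumR (fun j => indic (Q j) * g p i j k) (h p)).
Proof. intro Hi.
 assert (H := fin_add X M (fun j x => Q j /\ inter (L p i) (iter_image T k (L p j)) x) (h p)).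
 cbv beta in H. rewrite H.
 - f_equal. apply sumR_ext; intros j Hj. apply muR_some. apply mu_pand. intros; apply g_fin; auto.
 - intros; apply meas_pand; intros; apply g_meas; auto.
 - intros j j' Hj Hj' Hjj x [_ [_ H1]] [_ [_ H2]]. rewrite img_iff in H1, H2.
   apply (ro_disj HT p Hj Hj' Hjj _ H1 H2).
 - intros j Hj. rewrite (muR_some X M _ (indic (Q j) * g p i j k)); apply mu_pand; intros; apply g_fin; auto.
Qed.

Lemma inner_meas p Q i k : (i < h p)%nat ->
  measurable M (fun x => exists j, (j < h p)%nat /\ (Q j /\ inter (L p i) (iter_image T k (L p j)) x)).
Proof. intro Hi. apply (meas_exlt X M (fun j x => Q j /\ inter (L p i) (iter_image T k (L p j)) x)).
 intros; apply meas_pand; intros; apply g_meas; auto. Qed.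

Lemma mu_cross p P Q k : mu M (inter (EP p P) (iter_image T k (EP p Q))) =
  Some (sumR (fun i => sumR (fun j => indic (P i) * indic (Q j) * g p i j k) (h p)) (h p)).
Proof.
 replace (inter (EP p P) (iter_image T k (EP p Q))) with
   (fun x => exists i, (i < h p)%nat /\ (fun i x => P i /\
      (fun x => exists j, (j < h p)%nat /\ (Q j /\ inter (L p i) (iter_image T k (L p j)) x)) x) i x).
 2:{ apply pext; intro x. unfold inter, EP. rewrite !img_iff. split.
     - intros [i [Hi [HP [j [Hj [HQ [H1 H2]]]]]]]. rewrite img_iff in H2. split; [exists i; auto|].
       exists j; auto.
     - intros [[i [Hi [HP H1]]] [j [Hj [HQ H2]]]]. exists i; split; auto; split; auto.
       exists j; split; auto; split; auto; split; auto. rewrite img_iff; auto. }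
 rewrite fin_add.
 - f_equal. apply sumR_ext; intros i Hi. apply muR_some. cbv beta.
   rewrite (mu_pand X M _ _ (sumR (fun j => indic (Q j) * g p i j k) (h p))).
   f_equal. rewrite sumR_scal. apply sumR_ext; intros; ring.
   intros; apply mu_inner; auto.
 - intros i Hi. apply meas_pand; intros; apply inner_meas; auto.
 - intros i i' Hi Hi' Hii x [_ [j [_ [_ [H1 _]]]]] [_ [j' [_ [_ [H2 _]]]]].
   apply (ro_disj HT p Hi Hi' Hii _ H1 H2).
 - intros i Hi. cbv beta. erewrite muR_some; apply mu_pand; intros; apply mu_inner; auto.
Qed.

Definition rep p E := exists P, forall x, E x <-> EP p P x.

Lemma sumN_mono f a b : (a <= b)%nat -> (sumN f a <= sumN f b)%nat.
Proof. intro H; induction H; simpl; lia. Qed.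

Lemma rep_S p E : rep p E -> rep (S p) E.
Proof. intros [P HP]. exists (fun i' => exists i k, (i < h p)%nat /\ P i /\ (k < r p)%nat /\ i' = (offset r s p k + i)%nat).
 intro x. rewrite HP. unfold EP. split.
 - intros [i [Hi [Pi Hx]]]. apply (ro_cut HT p Hi) in Hx. destruct Hx as [k [Hk Hx]].
   exists (offset r s p k + i)%nat. split; [|split; eauto 10].
   simpl. unfold offset. pose proof (sumN_mono (s p) k (r p) ltac:(lia)). nia.
 - intros [i' [_ [[i [k [Hi [Pi [Hk ->]]]]] Hx]]]. exists i; split; auto; split; auto.
   apply (ro_cut HT p Hi). eauto.
Qed.

Lemma rep_le p q E : (p <= q)%nat -> rep p E -> rep q E.
Proof. intro H; induction H; auto. intro; apply rep_S; auto. Qed.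

Lemma rep_level p i : (i < h p)%nat -> rep p (L p i).
Proof. intro Hi. exists (fun i' => i' = i). intro x; unfold EP; split.
 intro; exists i; auto. intros [i' [_ [-> H]]]; auto. Qed.

Lemma rep_or p E F : rep p E -> rep p F -> rep p (fun x => E x \/ F x).
Proof. intros [P HP] [Q HQ]. exists (fun i => P i \/ Q i). intro x. rewrite HP, HQ. unfold EP. split.
 intros [[i [? [? ?]]]|[i [? [? ?]]]]; exists i; tauto.
 intros [i [? [[?|?] ?]]]; [left|right]; exists i; tauto. Qed.

Lemma rep_union l : (forall q, In q l -> (snd q < h (fst q))%nat) ->
  exists j0, forall m, (j0 <= m)%nat -> rep m (fun x => exists q, In q l /\ L (fst q) (snd q) x).
Proof. induction l as [|q l IH]; intro Hl.
 - exists O. intros m _. exists (fun _ => False). intro x; unfold EP; split.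
   intros [q [[] _]]. intros [i [_ [[] _]]].
 - destruct IH as [j0 Hj0]. intros; apply Hl; simpl; auto.
   exists (Nat.max j0 (fst q)). intros m Hm.
   assert (H := rep_or m _ _ (rep_le (fst q) m _ ltac:(lia) (rep_level (fst q) (snd q) (Hl q (or_introl eq_refl))))
                  (Hj0 m ltac:(lia))).
   destruct H as [P HP]. exists P. intro x. rewrite <- HP. split.
   intros [q' [[<-|Hq'] Hx]]; [left|right]; eauto.
   intros [Hx|[q' [Hq' Hx]]]; [exists q|exists q']; simpl; auto.
Qed.

Lemma rep_lu A : level_union r s L A -> exists j0, forall m, (j0 <= m)%nat -> rep m A.
Proof. intros [l [Hl HA]]. destruct (rep_union l Hl) as [j0 Hj0]. exists j0. intros m Hm.
 destruct (Hj0 m Hm) as [P HP]. exists P. intro x. rewrite HA; auto. Qed.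


Lemma g_down p k : forall i j, (i <= j)%nat -> (j < h p)%nat -> g p i j k = g p 0 (j - i) k.
Proof. induction i; intros j Hij Hj. rewrite Nat.sub_0_r; auto.
 destruct j; [lia|]. rewrite g_shift by lia. rewrite IHi by lia. f_equal. Qed.

Lemma g_up0 p e : forall k, (e < h p)%nat -> g p 0 e k = g p 0 0 (k + e).
Proof. induction e; intros k He. rewrite Nat.add_0_r; auto.
 rewrite g_k by lia. rewrite IHe by lia. f_equal. lia. Qed.

Lemma g_col p i t : forall j k', (j + t < h p)%nat -> g p i j (k' + t) = g p i (j + t) k'.
Proof. induction t; intros j k' Hj. rewrite !Nat.add_0_r; auto.
 replace (k' + S t)%nat with (S (k' + t)) by lia. rewrite <- g_k by lia.
 rewrite IHt by lia. f_equal. lia. Qed.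

Lemma g_diff p i j n : (i < h p)%nat -> (j < h p)%nat ->
  Rabs (sumR (fun k => g p i j k) n - sumR (fun k => g p 0 0 k) n) <= INR (h p) * w p.
Proof. intros Hi Hj.
 assert (Hb : forall i j, (i < h p)%nat -> (j < h p)%nat -> forall k, 0 <= g p i j k <= w p)
   by (intros; apply g_fin; auto).
 assert (Hw : 0 <= w p) by (destruct (Hb i j Hi Hj O); lra).
 destruct (le_lt_dec i j) as [Hij|Hij].
 - rewrite Rabs_minus_sym.
   eapply Rle_trans. apply (shift_cmp (fun k => g p 0 0 k) (fun k => g p i j k) (w p) (j - i)).
   intro; apply Hb; lia. intro; apply Hb; auto.
   intro k. rewrite (g_down p k i j) by auto. rewrite (g_up0 p (j - i) k) by lia. auto.
   apply Rmult_le_compat_r; auto. apply le_INR; lia.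
 - eapply Rle_trans. apply (shift_cmp (fun k => g p i j k) (fun k => g p 0 0 k) (w p) (i - j)).
   intro; apply Hb; auto. intro; apply Hb; lia.
   intro k. rewrite g_col by lia. replace (j + (i - j))%nat with i by lia.
   rewrite g_down by lia. rewrite Nat.sub_diag. auto.
   apply Rmult_le_compat_r; auto. apply le_INR; lia.
Qed.

Definition cnt p P := sumR (fun i => indic (P i)) (h p).
Definition Sg p n := sumR (fun k => g p 0 0 k) n.

Lemma asym p P Q n :
  Rabs (sumR (fun k => muR M (inter (EP p P) (iter_image T k (EP p Q)))) n - cnt p P * cnt p Q * Sg p n)
  <= INR (h p) * (INR (h p) * (INR (h p) * w p)).
Proof.
 rewrite (sumR_ext _ (fun k => sumR (fun i => sumR (fun j => indic (P i) * indic (Q j) * g p i j k) (h p)) (h p)))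
   by (intros; apply muR_some; apply mu_cross).
 rewrite sumR_exch.
 rewrite (sumR_ext (fun i => sumR (fun k => sumR (fun j => indic (P i) * indic (Q j) * g p i j k) (h p)) n)
    (fun i => sumR (fun j => indic (P i) * indic (Q j) * sumR (fun k => g p i j k) n) (h p))).
 2:{ intros i Hi. rewrite sumR_exch. apply sumR_ext; intros j Hj. rewrite sumR_scal. auto. }
 assert (E : cnt p P * cnt p Q * Sg p n =
   sumR (fun i => sumR (fun j => indic (P i) * indic (Q j) * Sg p n) (h p)) (h p)).
 { unfold cnt. rewrite Rmult_assoc, sumR_scal_r. apply sumR_ext; intros i Hi.
   rewrite sumR_scal_r, sumR_scal. apply sumR_ext; intros; ring. }
 rewrite E, <- sumR_minus. apply sumR_abs. intros i Hi.
 rewrite <- sumR_minus. apply sumR_abs. intros j Hj.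
 replace (indic (P i) * indic (Q j) * sumR (fun k => g p i j k) n - indic (P i) * indic (Q j) * Sg p n)
   with (indic (P i) * indic (Q j) * (sumR (fun k => g p i j k) n - Sg p n)) by ring.
 rewrite Rabs_mult. pose proof (g_diff p i j n Hi Hj). unfold Sg.
 pose proof (indic_bounds (P i)). pose proof (indic_bounds (Q j)).
 rewrite Rabs_right by nra.
 assert (0 <= Rabs (sumR (fun k => g p i j k) n - sumR (fun k => g p 0 0 k) n)) by apply Rabs_pos.
 cbv beta in *. assert (0 <= indic (P i) * indic (Q j) <= 1) by nra. set (Z := Rabs _) in *. nra.
Qed.



Lemma muR_nonneg E : 0 <= muR M E.
Proof. unfold muR. destruct (mu M E) eqn:H; [apply (mu_nonneg M E H)|lra]. Qed.

Definition DI n := sumR (fun k => muR M (inter (L 0%nat 0%nat) (iter_image T k (L 0%nat 0%nat)))) n.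

Lemma DI_mono n m : (n <= m)%nat -> DI n <= DI m.
Proof. intro; unfold DI; apply sumR_mono; auto; intro; apply muR_nonneg. Qed.

Lemma lower p P : (forall x, L 0%nat 0%nat x <-> EP p P x) ->
  DI (h p) >= w p * (cnt p P * (cnt p P + 1) / 2).
Proof. intro HP. assert (E : L 0%nat 0%nat = EP p P) by (apply pext; auto).
 unfold DI. cbv beta. set (mI := muR M (L 0%nat 0%nat)). rewrite E.
 rewrite (sumR_ext _ (fun k => sumR (fun i => sumR (fun j => indic (P i) * indic (P j) * g p i j k) (h p)) (h p)))
   by (intros; apply muR_some; apply mu_cross).
 rewrite sumR_exch. unfold cnt. rewrite <- tri_sum by (intro; apply indic_sq).
 rewrite sumR_scal. apply Rle_ge. apply sumR_le. intros i Hi.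
 rewrite sumR_exch.
 rewrite <- (prefix_sum _ i (h p) Hi).
 rewrite sumR_scal, sumR_scal. apply sumR_le. intros j Hj.
 assert (Hb : forall k, 0 <= indic (P i) * indic (P j) * g p i j k).
 { intro k. pose proof (indic_bounds (P i)). pose proof (indic_bounds (P j)).
   pose proof (g_fin p i j k Hi Hj). apply Rmult_le_pos; [nra|lra]. }
 destruct (Nat.leb j i) eqn:Hji.
 - apply Nat.leb_le in Hji.
   eapply Rle_trans; [|apply (sumR_term _ (h p) (i - j)); [intros; apply Hb|lia]].
   cbv beta. rewrite (g_diag2 p i (i - j) j) by lia. replace (j + (i - j))%nat with i by lia.
   rewrite g_diag by auto. cbv beta. fold mI. lra.
 - rewrite Rmult_0_r, Rmult_0_r. apply sumR_nonneg; intros; apply Hb.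
Qed.

Lemma width_pos p : 0 < w p.
Proof. induction p; simpl. apply (ro_I HT). cbv beta in IHp.
 assert (2 <= r p)%nat by apply (ro_r HT). assert (0 < INR (r p)) by (apply lt_0_INR; lia).
 apply Rdiv_lt_0_compat; auto. Qed.

Lemma width_dec p : w p * (INR p + 1) <= w 0%nat.
Proof. cbv beta. set (mI := muR M (L 0%nat 0%nat)).
 induction p. simpl; lra.
 assert (2 <= r p)%nat by apply (ro_r HT). assert (2 <= INR (r p)) by (apply (le_INR 2); lia).
 pose proof (width_pos p). cbv beta in *. fold mI in H1.
 change (width mI r (S p)) with (width mI r p / INR (r p)). rewrite S_INR.
 change (width mI r 0) with mI in *.
 set (wp := width mI r p) in *.
 apply Rle_trans with (wp * (INR p + 1)); auto.
 unfold Rdiv. rewrite Rmult_assoc. apply Rmult_le_compat_l; [lra|].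
 pose proof (pos_INR p).
 apply (Rmult_le_reg_l (INR (r p))); [lra|]. rewrite <- Rmult_assoc, Rinv_r by lra. nra. Qed.

Lemma DI_div : forall K, exists N, forall n, (N <= n)%nat -> DI n >= K.
Proof. intro K.
 set (mI := muR M (L 0%nat 0%nat)).
 assert (HmI : 0 < mI) by apply (ro_I HT).
 destruct (INR_unbounded (2 * K / mI)) as [p Hp].
 assert (Hr : rep p (L 0%nat 0%nat)).
 { apply (rep_le 0%nat); [lia|]. apply rep_level. simpl; lia. }
 destruct Hr as [P HP].
 exists (h p). intros n Hn. apply Rle_ge. eapply Rle_trans; [|apply DI_mono; eauto].
 pose proof (lower p P HP) as Hl.
 assert (E : L 0%nat 0%nat = EP p P) by (apply pext; auto).
 assert (HC : mI = cnt p P * w p).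
 { pose proof (mu_EP p P) as H0. rewrite <- E in H0. unfold mI. etransitivity. apply (muR_some X M _ _ H0). unfold cnt. rewrite sumR_scal_r. auto. }
 pose proof (width_dec p). pose proof (width_pos p). cbv beta in *. fold mI in H, HC.
 change (width mI r 0) with mI in H. fold mI in Hl. fold mI in H0. set (wp := width mI r p) in *. set (C := cnt p P) in *.
 assert (C >= INR p + 1).
 { apply Rle_ge. apply (Rmult_le_reg_r wp); auto. lra. }
 assert (2 * K / mI * mI = 2 * K) by (field; lra).
 assert (INR p * mI >= 2 * K / mI * mI) by (apply Rmult_ge_compat_r; lra).
 pose proof (pos_INR p). nra.
Qed.


Lemma main_sec (A B : X -> Prop) (HA : level_union r s L A) (HB : level_union r s L B) :
  Un_cv (fun n => / a_coef M T (L 0%nat 0%nat) n *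
                  sumR (fun k => muR M (inter A (iter_image T k B))) n)
        (muR M A * muR M B).
Proof.
 destruct (rep_lu A HA) as [jA HjA]. destruct (rep_lu B HB) as [jB HjB].
 set (m := Nat.max jA jB).
 destruct (HjA m ltac:(lia)) as [PA HPA]. destruct (HjB m ltac:(lia)) as [PB HPB].
 assert (HI : rep m (L 0%nat 0%nat)).
 { apply (rep_le 0%nat); [lia|]. apply rep_level. simpl; lia. }
 destruct HI as [PI HPI].
 assert (EA : A = EP m PA) by (apply pext; auto).
 assert (EB : B = EP m PB) by (apply pext; auto).
 assert (EI : L 0%nat 0%nat = EP m PI) by (apply pext; auto).
 set (mI := muR M (L 0%nat 0%nat)).
 assert (HmI : 0 < mI) by apply (ro_I HT).
 assert (Ha : forall n, a_coef M T (L 0%nat 0%nat) n = DI n / mI ^ 2).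
 { intro n. unfold a_coef, DI, u_coef. apply sumR_div. }
 assert (Hcnt : forall P, (forall x, L 0%nat 0%nat x <-> EP m P x) \/ True ->
    muR M (EP m P) = cnt m P * w m).
 { intros P _. apply muR_some. rewrite mu_EP. unfold cnt. rewrite sumR_scal_r. auto. }
 assert (HmIc : mI = cnt m PI * w m).
 { pose proof (mu_EP m PI) as H0. rewrite <- EI in H0. unfold mI. etransitivity.
   apply (muR_some X M _ _ H0). unfold cnt. rewrite sumR_scal_r. auto. }
 assert (Hmu_A : muR M A = cnt m PA * w m).
 { pose proof (mu_EP m PA) as H0. rewrite <- EA in H0. etransitivity.
   apply (muR_some X M _ _ H0). unfold cnt. rewrite sumR_scal_r. auto. }
 assert (Hmu_B : muR M B = cnt m PB * w m).
 { pose proof (mu_EP m PB) as H0. rewrite <- EB in H0. etransitivity.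
   apply (muR_some X M _ _ H0). unfold cnt. rewrite sumR_scal_r. auto. }
 pose proof (width_pos m) as Hw. cbv beta in *. fold mI in Hw, HmIc, Hmu_A, Hmu_B.
 set (wm := width mI r m) in *.
 assert (HcI : 0 < cnt m PI) by (apply (Rmult_lt_reg_r wm); nra).
 replace (fun n => / a_coef M T (L 0%nat 0%nat) n * sumR (fun k => muR M (inter A (iter_image T k B))) n)
   with (fun n => / (DI n / mI ^ 2) * sumR (fun k => muR M (inter A (iter_image T k B))) n)
   by (apply functional_extensionality; intro n; rewrite Ha; auto).
 replace (muR M A * muR M B) with (mI ^ 2 * (cnt m PA * cnt m PB) / (cnt m PI * cnt m PI))
   by (rewrite Hmu_A, Hmu_B, HmIc; field; lra).
 apply (lim_ratio _ _ (Sg m) _ _ _ (INR (h m) * (INR (h m) * (INR (h m) * w m)))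
                  (INR (h m) * (INR (h m) * (INR (h m) * w m)))).
 - nra.
 - nra.
 - intro n. rewrite EA, EB. apply asym.
 - intro n. unfold DI. pose proof (asym m PI PI n) as Ha2. rewrite <- EI in Ha2. exact Ha2.
 - apply DI_div.
Qed.

End Rank.

Theorem mainTheorem2 (X : Type) (M : MeasureSpace X) (T : X -> X)
  (r : nat -> nat) (s : nat -> nat -> nat) (L : nat -> nat -> X -> Prop)
  (HT : RankOne M T r s L)
  (A B : X -> Prop)
  (HA : level_union r s L A) (HB : level_union r s L B)
  (HAI : forall x, A x -> L 0%nat 0%nat x) (HBI : forall x, B x -> L 0%nat 0%nat x) :
  Un_cv (fun n => / a_coef M T (L 0%nat 0%nat) n *
                  sumR (fun k => muR M (inter A (iter_image T k B))) n)
        (muR M A * muR M B).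
Proof.
  destruct (ro_inv HT) as [Tinv [H1 [H2 H3]]].
  eapply main_sec; eauto.
Qed.
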